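(* Let $X$ be a compact metric space with metric $d$, let $f:X\to X$ be continuous, let $Q=\{m_i\}_{i=1}^\infty$ be a strictly increasing sequence of positive integers, and let $\delta>0$. Then the set of all distributional $\delta$-scrambled pairs in the sequence $Q$ is a $G_\delta$ subset of $X\times X$.
   Context: For $x,y\in X$, $t>0$, $n\ge1$, put $\Phi^n_{(xy,Q)}(t)=\frac1n\#\{1\le i\le n: d(f^{m_i}(x),f^{m_i}(y))\le t\}$, $\Phi_{(xy,Q)}(t)=\liminf_{n\to\infty}\Phi^n_{(xy,Q)}(t)$ and $\Phi^\star_{(xy,Q)}(t)=\limsup_{n\to\infty}\Phi^n_{(xy,Q)}(t)$. A pair $(x,y)\in X\times X$ is a distributional $\delta$-scrambled pair in the sequence $Q$ if (1) $\Phi^\star_{(xy,Q)}(t)=1$ for every $t>0$, and (2) $\Phi_{(xy,Q)}(\delta)=0$. *)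

(* Defs.v *)
From HB Require Import structures.
From mathcomp Require Import all_boot all_order all_algebra.
From mathcomp Require Import all_classical all_reals all_analysis.
From mathcomp Require Import borel_hierarchy.
Set Implicit Arguments. Unset Strict Implicit. Unset Printing Implicit Defensive.
Import Order.TTheory GRing.Theory Num.Theory.
Import numFieldNormedType.Exports.
Local Open Scope classical_set_scope.
Local Open Scope ring_scope.

(* The sequence Q = {m_i}_{i>=1} is represented by m : nat -> nat with
   m_i = m (i-1), i.e. the paper's index i in 1..n corresponds to i-1 in 0..n-1. *)

Definition close_at {R : realType} {X : metricType R} (f : X -> X) (m : nat -> nat)
    (x y : X) (t : R) (i : nat) : bool :=
  mdist (iter (m i) f x) (iter (m i) f y) <= t.

Definition Phi_n {R : realType} {X : metricType R} (f : X -> X) (m : nat -> nat)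
    (x y : X) (t : R) (n : nat) : R :=
  (\sum_(i < n) nat_of_bool (close_at f m x y t i))%N%:R / n%:R.

Definition Phi_lower {R : realType} {X : metricType R} (f : X -> X) (m : nat -> nat)
    (x y : X) (t : R) : \bar R :=
  limn_einf (fun n => (Phi_n f m x y t n)%:E).

Definition Phi_upper {R : realType} {X : metricType R} (f : X -> X) (m : nat -> nat)
    (x y : X) (t : R) : \bar R :=
  limn_esup (fun n => (Phi_n f m x y t n)%:E).

Definition distr_scrambled_pair {R : realType} {X : metricType R} (f : X -> X)
    (m : nat -> nat) (delta : R) (x y : X) : Prop :=
  (forall t : R, 0 < t -> Phi_upper f m x y t = 1%:E) /\
  Phi_lower f m x y delta = 0%:E.

Definition distr_scrambled_pairs {R : realType} {X : metricType R} (f : X -> X)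
    (m : nat -> nat) (delta : R) : set (X * X) :=
  [set p | distr_scrambled_pair f m delta p.1 p.2].

(* Main.v *)
Require Import Defs.
From HB Require Import structures.
From mathcomp Require Import all_boot all_order all_algebra.
From mathcomp Require Import all_classical all_reals all_analysis.
From mathcomp Require Import borel_hierarchy lra.
Import Order.TTheory GRing.Theory Num.Theory.
Import numFieldNormedType.Exports.
Local Open Scope classical_set_scope.
Local Open Scope ring_scope.

Definition rr (R : realType) (j : nat) : R := (j.+1%:R)^-1.

Lemma rr_gt0 (R : realType) j : 0 < rr R j.
Proof. by rewrite /rr invr_gt0 ltr0n. Qed.

Lemma rr_le1 (R : realType) j : rr R j <= 1.
Proof. by rewrite /rr invr_le1 ?ler1n ?unitfE ?pnatr_eq0 ?ltr0n. Qed.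

Lemma rr_mono (R : realType) i j : (i <= j)%N -> rr R j <= rr R i.
Proof.
by move=> ij; rewrite /rr lef_pV2 ?posrE ?ltr0n // ler_nat ltnS.
Qed.

Lemma exists_rr (R : realType) N (c : R) : 0 < c -> exists2 j, (N <= j)%N & rr R j <= c.
Proof.
move=> c0; exists (N + Num.Def.trunc c^-1)%N; first exact: leq_addr.
rewrite /rr -[c in _ <= c]invrK lef_pV2 ?posrE ?ltr0n ?invr_gt0 //.
apply: le_trans (ltW (truncnS_gt _)) _.
by rewrite ler_nat ltnS leq_addl.
Qed.
Lemma esup_char (R : realType) (u : nat -> R) (a : R) : (forall n, u n <= a) ->
  limn_esup (fun n => (u n)%:E) = a%:E <->
  forall N e, 0 < e -> exists2 n, (N <= n)%N & a - e < u n.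
Proof.
move=> ua.
have E : limn_esup (fun n => (u n)%:E) =
    ereal_inf (range (esups (fun n => (u n)%:E))).
  by rewrite limn_esup_lim; apply/cvg_lim => //; exact: cvg_esups_inf.
have ub N : (esups (fun n => (u n)%:E) N <= a%:E)%E.
  by apply: ge_ereal_sup => _ [n _ <-]; rewrite lee_fin.
split.
- move=> H N e e0.
  have : (a%:E <= esups (fun n => (u n)%:E) N)%E.
    by rewrite -H E; apply: ereal_inf_lbound; exists N.
  move=> aN.
  have : ((a - e)%:E < esups (fun n => (u n)%:E) N)%E.
    by apply: lt_le_trans aN; rewrite lte_fin ltrBlDr ltrDl.
  move=> /ereal_sup_gt [_ [n /= Nn <-]]; rewrite lte_fin => h.
  by exists n.
- move=> H; apply/le_anti/andP; split.
    rewrite E; apply: le_trans (ub 0%N); apply: ereal_inf_lbound; by exists 0%N.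
  rewrite E; apply: le_ereal_inf_tmp => _ [N _ <-].
  apply/lee_subgt0Pr => e e0.
  have [n Nn hn] := H N e e0.
  apply: le_ereal_sup_tmp; exists (u n)%:E; first by exists n.
  by rewrite -EFinB lee_fin ltW.
Qed.

Lemma einf_char (R : realType) (u : nat -> R) (a : R) : (forall n, a <= u n) ->
  limn_einf (fun n => (u n)%:E) = a%:E <->
  forall N e, 0 < e -> exists2 n, (N <= n)%N & u n < a + e.
Proof.
move=> ua.
have -> : limn_einf (fun n => (u n)%:E) = (- limn_esup (fun n => (- u n)%:E))%E.
  by rewrite /limn_einf; congr (- limn_esup _)%E; apply/funext => n; rewrite EFinN.
have H := @esup_char R (fun n => - u n) (- a).
have ua' : forall n, - u n <= - a by move=> n; rewrite lerN2.
split.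
- move=> h; have h' : limn_esup (fun n => (- u n)%:E) = (- a)%:E.
    by rewrite EFinN -h oppeK.
  move=> N e e0; have [n Nn hn] := (H ua').1 h' N e e0.
  exists n => //. move: hn. rewrite ltrBlDr. lra.
- move=> h; rewrite (H ua').2 ?EFinN ?oppeK //.
  move=> N e e0; have [n Nn hn] := h N e e0; exists n => //.
  lra.
Qed.
Lemma near_fst (R : realType) (X : metricType R) (g : X -> X) (p : X * X) :
  continuous g -> forall e, 0 < e -> \forall q \near p, mdist (g p.1) (g q.1) < e.
Proof.
move=> cg e e0.
have hc : (g \o fst) @ nbhs p --> g p.1.
  apply: continuous_comp; last exact: cg.
  exact: cvg_fst.
exact: (metricType_numDomainType.cvgr_dist_lt hc e0).
Qed.
Lemma near_snd (R : realType) (X : metricType R) (g : X -> X) (p : X * X) :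
  continuous g -> forall e, 0 < e -> \forall q \near p, mdist (g p.2) (g q.2) < e.
Proof.
move=> cg e e0.
have hc : (g \o snd) @ nbhs p --> g p.2.
  apply: continuous_comp; last exact: cg.
  exact: cvg_snd.
exact: (metricType_numDomainType.cvgr_dist_lt hc e0).
Qed.

Lemma open_dist_lt (R : realType) (X : metricType R) (g : X -> X) (t : R) :
  continuous g -> open [set p : X * X | mdist (g p.1) (g p.2) < t].
Proof.
move=> cg; rewrite openE => p /= hp.
pose e := (t - mdist (g p.1) (g p.2)) / 2.
have e0 : 0 < e by rewrite /e divr_gt0 // subr_gt0.
have h1 := near_fst _ _ g p cg _ e0; have h2 := near_snd _ _ g p cg _ e0.
rewrite /interior /=.
near=> q.
have t1 := metric_triangle (g q.1) (g p.1) (g q.2).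
have t2 := metric_triangle (g p.1) (g p.2) (g q.2).
have d1 : mdist (g p.1) (g q.1) < e.
  near: q. exact: h1.
have d2 : mdist (g p.2) (g q.2) < e.
  near: q. exact: h2.
rewrite (metric_sym (g q.1) (g p.1)) in t1.
rewrite /e in d1 d2 *; rewrite /=; lra.
Unshelve. all: by end_near. Qed.

Lemma open_dist_gt (R : realType) (X : metricType R) (g : X -> X) (t : R) :
  continuous g -> open [set p : X * X | t < mdist (g p.1) (g p.2)].
Proof.
move=> cg; rewrite openE => p /= hp.
pose e := (mdist (g p.1) (g p.2) - t) / 2.
have e0 : 0 < e by rewrite /e divr_gt0 // subr_gt0.
have h1 := near_fst _ _ g p cg _ e0; have h2 := near_snd _ _ g p cg _ e0.
rewrite /interior /=.
near=> q.
have t1 := metric_triangle (g p.1) (g q.1) (g p.2).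
have t2 := metric_triangle (g q.1) (g q.2) (g p.2).
have d1 : mdist (g p.1) (g q.1) < e.
  near: q. exact: h1.
have d2 : mdist (g p.2) (g q.2) < e.
  near: q. exact: h2.
rewrite (metric_sym (g q.2) (g p.2)) in t2.
rewrite /e in d1 d2 *; rewrite /=; lra.
Unshelve. all: by end_near. Qed.
Lemma open_count_up (T : topologicalType) n (P : 'I_n -> T -> bool)
    (Q : nat -> Prop) :
  (forall i, open [set q | P i q]) -> (forall a b, Q a -> (a <= b)%N -> Q b) ->
  open [set q | Q (\sum_(i < n) P i q)%N].
Proof.
move=> oP mQ; rewrite openE => p /= Qp.
have : \forall q \near p, forall i, P i p -> P i q.
  apply: filter_forall => i.
  case Pi: (P i p); last by apply: nearW.
  have : nbhs p [set q | P i q].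
    by apply: open_nbhs_nbhs; split.
  by apply: filterS => q /= ->.
rewrite /interior /=.
apply: filterS => q Hq; apply: mQ Qp _; apply: leq_sum => i _.
by move: (Hq i); case: (P i p) => //= ->.
Qed.

Lemma open_count_down (T : topologicalType) n (P : 'I_n -> T -> bool)
    (Q : nat -> Prop) :
  (forall i, open [set q | ~~ P i q]) -> (forall a b, Q b -> (a <= b)%N -> Q a) ->
  open [set q | Q (\sum_(i < n) P i q)%N].
Proof.
move=> oP mQ; rewrite openE => p /= Qp.
have : \forall q \near p, forall i, ~~ P i p -> ~~ P i q.
  apply: filter_forall => i.
  case Pi: (P i p); first by apply: nearW.
  have : nbhs p [set q | ~~ P i q].
    by apply: open_nbhs_nbhs; split => //=; rewrite Pi.
  by apply: filterS => q /= ->.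
rewrite /interior /=.
apply: filterS => q Hq; apply: mQ Qp _; apply: leq_sum => i _.
by move: (Hq i); case: (P i q) => //=; case: (P i p) => //= /(_ isT).
Qed.

Lemma bool_leq (a b : bool) : (a -> b) -> (a <= b)%N.
Proof. by case: a; case: b => // /(_ isT). Qed.

Section Main.
Variables (R : realType) (X : metricType R) (f : X -> X) (m : nat -> nat).

Definition cnt_lt (t : R) n (x y : X) :=
  (\sum_(i < n) (mdist (iter (m i) f x) (iter (m i) f y) < t)%R)%N.
Definition cnt_le (t : R) n (x y : X) :=
  (\sum_(i < n) close_at f m x y t i)%N.

Lemma cnt_le_n t n x y : (cnt_le t n x y <= n)%N.
Proof.
rewrite /cnt_le.
apply: (@leq_trans (\sum_(i < n) 1)%N).
  by apply: leq_sum => i _; exact: leq_b1.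
by rewrite sum_nat_const card_ord muln1.
Qed.

Lemma cnt_le_lt t s n x y : t < s -> (cnt_le t n x y <= cnt_lt s n x y)%N.
Proof.
move=> ts; apply: leq_sum => i _; rewrite /close_at.
by apply: bool_leq => h; apply: le_lt_trans h ts.
Qed.

Lemma cnt_lt_le s t n x y : s <= t -> (cnt_lt s n x y <= cnt_le t n x y)%N.
Proof.
move=> st; apply: leq_sum => i _; rewrite /close_at.
by apply: bool_leq => h; apply: le_trans (ltW h) st.
Qed.

Lemma Phi_le1 x y t n : Phi_n f m x y t n <= 1.
Proof.
rewrite /Phi_n; case: n => [|n]; first by rewrite invr0 mulr0.
rewrite ler_pdivrMr ?ltr0n // mul1r ler_nat; exact: cnt_le_n.
Qed.

Lemma Phi_ge0 x y t n : 0 <= Phi_n f m x y t n.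
Proof. by rewrite /Phi_n divr_ge0. Qed.

End Main.
Arguments cnt_lt {R X}.
Arguments cnt_le {R X}.
Arguments cnt_le_lt {R X}.
Arguments cnt_lt_le {R X}.
Arguments Phi_le1 {R X}.
Arguments Phi_ge0 {R X}.
Arguments cnt_le_n {R X}.

Lemma iter_cont (R : realType) (X : metricType R) (f : X -> X) k :
  continuous f -> continuous (iter k f).
Proof.
move=> cf; elim: k => [|k IH] x /=; first exact: cvg_id.
exact: (@continuous_comp _ _ _ (iter k f) f x (IH x) (cf _)).
Qed.

Arguments esup_char {R u a}.
Arguments einf_char {R u a}.
Arguments exists_rr R N {c}.

Theorem proposition2p3 (R : realType) (X : metricType R) (f : X -> X)
    (m : nat -> nat) (delta : R) :
  compact [set: X] ->
  continuous f ->
  (forall i, (0 < m i)%N) ->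
  (forall i j, (i < j)%N -> (m i < m j)%N) ->
  0 < delta ->
  Gdelta (distr_scrambled_pairs f m delta).
Proof.
move=> _ cf _ _ d0.
pose G j := \bigcup_(n in [set n | (j <= n)%N])
  [set p : X * X | (1 - rr R j) * n%:R < (cnt_lt f m (rr R j) n p.1 p.2)%:R].
pose H j := \bigcup_(n in [set n | (j <= n)%N])
  [set p : X * X | (cnt_le f m delta n p.1 p.2)%:R < rr R j * n%:R].
exists (fun j => G j `&` H j).
  move=> j; apply: openI; apply: bigcup_open => n _.
    apply: (@open_count_up _ n
      (fun i p => mdist (iter (m i) f p.1) (iter (m i) f p.2) < rr R j)
      (fun a => (1 - rr R j) * n%:R < a%:R)).
      by move=> i; apply: open_dist_lt; apply: iter_cont.
    by move=> a b h ab; apply: lt_le_trans h _; rewrite ler_nat.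
  apply: (@open_count_down _ n
      (fun i p => close_at f m p.1 p.2 delta i)
      (fun a => a%:R < rr R j * n%:R)).
    move=> i; have -> : [set q : X * X | ~~ close_at f m q.1 q.2 delta i] =
        [set q | delta < mdist (iter (m i) f q.1) (iter (m i) f q.2)].
      by apply/seteqP; split => q /=; rewrite /close_at -ltNge.
    by apply: open_dist_gt; apply: iter_cont.
  by move=> a b h ab; apply: le_lt_trans h; rewrite ler_nat.
apply/seteqP; split.
- move=> [x y] [hU hL] j _; split.
  + have t0 : 0 < rr R j / 2 by rewrite divr_gt0 // rr_gt0.
    have := hU _ t0.
    move=> /(esup_char (fun n => Phi_le1 f m x y (rr R j / 2) n)).
    move=> /(_ j.+1 (rr R j) (rr_gt0 R j)) [n jn hn].
    have n0 : (0 < n)%N by apply: leq_trans jn.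
    exists n; first exact: ltnW.
    rewrite /= ; rewrite /Phi_n ltr_pdivlMr ?ltr0n // in hn.
    apply: lt_le_trans hn _; rewrite ler_nat; apply: cnt_le_lt.
    by rewrite ltr_pdivrMr // ltr_pMr ?rr_gt0 // ltr1n.
  + move: hL => /(einf_char (fun n => Phi_ge0 f m x y delta n)).
    move=> /(_ j.+1 (rr R j) (rr_gt0 R j)) [n jn hn].
    have n0 : (0 < n)%N by apply: leq_trans jn.
    exists n; first exact: ltnW.
    rewrite /= ; rewrite /Phi_n add0r ltr_pdivrMr ?ltr0n // in hn.
- move=> [x y] Hall; split.
  + move=> t t0; apply/(esup_char (fun n => Phi_le1 f m x y t n)).
    move=> N e e0.
    have me : 0 < Num.min t e by rewrite lt_min t0 e0.
    have [j Nj] := exists_rr R N me.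
    rewrite le_min => /andP[jt je].
    have [[n jn hn] _] := Hall j I.
    move: hn => /= hn.
    have n0 : (0 < n)%N.
      by case: n {jn} hn => //; rewrite mulr0 /cnt_lt big_ord0 ltxx.
    exists n; first exact: leq_trans jn.
    rewrite /Phi_n ltr_pdivlMr ?ltr0n //.
    apply: (@le_lt_trans _ _ ((1 - rr R j) * n%:R)).
      by rewrite ler_wpM2r // lerB.
    apply: lt_le_trans hn _; rewrite ler_nat; exact: cnt_lt_le.
  + apply/(einf_char (fun n => Phi_ge0 f m x y delta n)).
    move=> N e e0.
    have [j Nj je] := exists_rr R N e0.
    have [_ [n jn hn]] := Hall j I.
    move: hn => /= hn.
    have n0 : (0 < n)%N.
      by case: n {jn} hn => //; rewrite mulr0 ltNge ler0n.
    exists n; first exact: leq_trans jn.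
    rewrite /Phi_n add0r ltr_pdivrMr ?ltr0n //.
    by apply: lt_le_trans hn _; rewrite ler_wpM2r.
Qed.
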